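(* Let $\alpha$ be an expanding algebraic number, $\mathcal{D}\subset\mathbb{Z}[\alpha]$ a standard digit set for $\alpha$, and $m\in\mathbb{Z}$ with $\mathcal{D}\subset\alpha^m\mathbb{Z}[\alpha^{-1}]$. Suppose $\mathcal{D}$ contains a complete residue system of $\alpha^m\mathbb{Z}[\alpha^{-1}]/\alpha^{m-1}\mathbb{Z}[\alpha^{-1}]$. Then for every $x\in\Lambda_{\alpha,m}$ there is $d\in\mathcal{D}$ with $\alpha x+d\in\Lambda_{\alpha,m}$, and consequently $\mathcal{G}(x)\neq\emptyset$.
   Context: $\alpha$ is an algebraic number all of whose conjugates have modulus $>1$. $K=\mathbb{Q}(\alpha)$, $\alpha\mathcal{O}_K=\mathfrak{a}/\mathfrak{b}$ with coprime integral ideals; $S_\alpha$ = infinite primes together with primes dividing $\mathfrak{b}$; $\mathbb{K}_\alpha=\prod_{\mathfrak{p}\in S_\alpha}K_\mathfrak{p}$ (completions), $\Phi_\alpha$ diagonal embedding. $\mathcal{D}$ standard: complete residue system of $\mathbb{Z}[\alpha]/\alpha\mathbb{Z}[\alpha]$. $\mathcal{F}=\{\sum_{k\ge1}\Phi_\alpha(d_k\alpha^{-k}):d_k\in\mathcal{D}\}$; $\mathcal{G}(x)=\{(z_\mathfrak{p})\in\mathcal{F}+\Phi_\alpha(x): z_\mathfrak{p}=0\ \forall\mathfrak{p}\mid\mathfrak{b}\}$. $\Lambda_{\alpha,k}=\mathbb{Z}[\alpha]\cap\alpha^{k-1}\mathbb{Z}[\alpha^{-1}]$. *)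

(* Defs.v *)
From HB Require Import structures.
From mathcomp Require Import all_boot all_order all_algebra all_field.
Set Implicit Arguments. Unset Strict Implicit. Unset Printing Implicit Defensive.
Import Order.TTheory GRing.Theory Num.Theory.
Local Open Scope ring_scope.

(* All objects live in algC, the algebraic closure of Q; alpha : algC is
   automatically an algebraic number. *)

Definition expanding (a : algC) : Prop :=
  forall z : algC, root (minCpoly a) z -> 1 < `|z|.

Definition Zadj (b z : algC) : Prop :=
  exists p : {poly int}, z = (map_poly (fun n : int => n%:~R) p).[b].

Definition powZinv (a : algC) (m : int) (z : algC) : Prop :=
  exists y, Zadj a^-1 y /\ z = a ^ m * y.

Definition Lambda (a : algC) (k : int) (z : algC) : Prop :=
  Zadj a z /\ powZinv a (k - 1) z.

Definition complete_residue_system (A M D : algC -> Prop) : Prop :=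
  (forall d, D d -> A d) /\
  (forall z, A z -> exists! d, D d /\ M (z - d)).

Definition standard_digits (a : algC) (D : algC -> Prop) : Prop :=
  complete_residue_system (Zadj a) (fun z => exists y, Zadj a y /\ z = a * y) D.

Definition Qadj (a z : algC) : Prop :=
  exists p : {poly rat}, z = (map_poly ratr p).[a].
Definition OK (a z : algC) : Prop := Qadj a z /\ z \in Aint.

Definition prime_ideal_OK (a : algC) (P : algC -> Prop) : Prop :=
  (forall z, P z -> OK a z) /\
  P 0 /\
  (forall y z, P y -> P z -> P (y + z)) /\
  (forall r z, OK a r -> P z -> P (r * z)) /\
  ~ P 1 /\
  (forall y z, OK a y -> OK a z -> P (y * z) -> P y \/ P z) /\
  (exists z, P z /\ z <> 0).

(* the denominator ideal b of a O_K = a/b : b = { z in O_K | a z in O_K } *)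
Definition den_ideal (a z : algC) : Prop := OK a z /\ OK a (a * z).

Fixpoint ideal_pow (a : algC) (P : algC -> Prop) (n : nat) : algC -> Prop :=
  match n with
  | 0 => OK a
  | n.+1 => fun z => exists s : seq (algC * algC),
      (forall q, q \in s -> P q.1 /\ ideal_pow a P n q.2) /\
      z = \sum_(q <- s) q.1 * q.2
  end.

(* v_P(y) >= N, for y in K  (y ∈ P^N O_{K,P}) *)
Definition val_ge (a : algC) (P : algC -> Prop) (N : nat) (y : algC) : Prop :=
  exists s, [/\ OK a s, ~ P s & ideal_pow a P N (s * y)].

Definition padic_to0 (a : algC) (P : algC -> Prop) (y : nat -> algC) : Prop :=
  forall N : nat, exists n0 : nat, forall n, (n0 <= n)%N -> val_ge a P N (y n).

(* G(x) is nonempty: there is a digit sequence (d_k)_{k>=1} in D such that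
   for every prime P | b, the P-adic component of
   sum_{k>=1} d_k a^-k + x vanishes, i.e. the partial sums of
   x + sum_k d_k a^-k tend to 0 in K_P.  (The infinite components carry no
   constraint in the definition of G(x).) *)
Definition G_nonempty (a : algC) (D : algC -> Prop) (x : algC) : Prop :=
  exists d : nat -> algC, (forall k, D (d k)) /\
    forall P, prime_ideal_OK a P -> (forall z, den_ideal a z -> P z) ->
      padic_to0 a P (fun n => x + \sum_(1 <= k < n.+1) d k * a ^- k).

(* Main.v *)
Require Import Defs.
From HB Require Import structures.
From mathcomp Require Import all_boot all_order all_algebra all_field.
From mathcomp Require Import ring zify.
From Stdlib Require Import Classical ClassicalEpsilon.
Import Order.TTheory GRing.Theory Num.Theory.
Local Open Scope ring_scope.

Section Clos.
Variable b : algC.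
Notation ev p := ((map_poly (fun n : int => n%:~R) p).[b]).

Lemma Zadj_add x y : Zadj b x -> Zadj b y -> Zadj b (x + y).
Proof. by move=> [p ->] [q ->]; exists (p + q); rewrite rmorphD hornerD. Qed.
Lemma Zadj_opp x : Zadj b x -> Zadj b (- x).
Proof. by move=> [p ->]; exists (- p); rewrite rmorphN hornerN. Qed.
Lemma Zadj_mul x y : Zadj b x -> Zadj b y -> Zadj b (x * y).
Proof. by move=> [p ->] [q ->]; exists (p * q); rewrite rmorphM hornerM. Qed.
Lemma Zadj_int (n : int) : Zadj b n%:~R.
Proof. by exists n%:P; rewrite map_polyC hornerC. Qed.
Lemma Zadj_gen : Zadj b b.
Proof. by exists 'X; rewrite map_polyX hornerX. Qed.
Lemma Zadj_exp k : Zadj b (b ^+ k).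
Proof. elim: k => [|k IH]; first by rewrite expr0; exact: (Zadj_int 1).
by rewrite exprS; apply: Zadj_mul => //; apply: Zadj_gen. Qed.
Lemma Zadj_zmul x (n : int) : Zadj b x -> Zadj b (x *~ n).
Proof. by move=> h; rewrite -mulrzr; apply: Zadj_mul => //; apply: Zadj_int. Qed.
Lemma Zadj_sum I (r : seq I) (P : pred I) F :
  (forall i, P i -> Zadj b (F i)) -> Zadj b (\sum_(i <- r | P i) F i).
Proof.
move=> h; elim/big_rec: _ => [|i x Pi Hx]; first exact: (Zadj_int 0).
by apply: Zadj_add => //; apply: h.
Qed.
Lemma Zadj_sub x y : Zadj b x -> Zadj b y -> Zadj b (x - y).
Proof. by move=> hx hy; apply: Zadj_add => //; apply: Zadj_opp. Qed.

Lemma Qadj_add x y : Qadj b x -> Qadj b y -> Qadj b (x + y).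
Proof. by move=> [p ->] [q ->]; exists (p + q); rewrite rmorphD hornerD. Qed.
Lemma Qadj_opp x : Qadj b x -> Qadj b (- x).
Proof. by move=> [p ->]; exists (- p); rewrite rmorphN hornerN. Qed.
Lemma Qadj_mul x y : Qadj b x -> Qadj b y -> Qadj b (x * y).
Proof. by move=> [p ->] [q ->]; exists (p * q); rewrite rmorphM hornerM. Qed.
Lemma Zadj_Qadj x : Zadj b x -> Qadj b x.
Proof.
move=> [p ->]; exists (map_poly (fun n : int => n%:~R) p); rewrite -map_poly_comp.
by congr (_.[b]); apply: eq_map_poly => n /=; rewrite rmorph_int.
Qed.

Lemma OK_add x y : OK b x -> OK b y -> OK b (x + y).
Proof. by move=> [? ?] [? ?]; split; [apply: Qadj_add | rewrite rpredD]. Qed.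
Lemma OK_opp x : OK b x -> OK b (- x).
Proof. by move=> [? ?]; split; [apply: Qadj_opp | rewrite rpredN]. Qed.
Lemma OK_mul x y : OK b x -> OK b y -> OK b (x * y).
Proof. by move=> [? ?] [? ?]; split; [apply: Qadj_mul | rewrite rpredM]. Qed.
Lemma OK_int (n : int) : OK b n%:~R.
Proof. by split; [apply/Zadj_Qadj/Zadj_int | apply: Aint_int]. Qed.
Lemma OK_exp x k : OK b x -> OK b (x ^+ k).
Proof. move=> h; elim: k => [|k IH]; first by rewrite expr0; exact: (OK_int 1).
by rewrite exprS; apply: OK_mul. Qed.
Lemma OK_sum I (r : seq I) (P : pred I) F :
  (forall i, P i -> OK b (F i)) -> OK b (\sum_(i <- r | P i) F i).
Proof.
move=> h; elim/big_rec: _ => [|i x Pi Hx]; first exact: (OK_int 0).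
by apply: OK_add => //; apply: h.
Qed.
End Clos.
Lemma Aint_module n (Y : 'I_n -> algC) (x : algC) (i0 : 'I_n) :
  Y i0 != 0 ->
  (forall j, exists a : 'I_n -> int, x * Y j = \sum_i Y i *~ a i) ->
  x \in Aint.
Proof.
move=> nz hY; have [A HA] := fin_all_exists hY.
pose M := \matrix_(i, j < n) ((A j i)%:~R : algC).
pose p := char_poly M.
have: p \is a polyOver Num.int_num_subdef.
  rewrite rpred_sum // => s _; rewrite rpredMsign rpred_prod // => j _.
  by rewrite !mxE /= rpredB ?rpredMn ?polyOverX ?polyOverC ?rpred_int.
apply: root_monic_Aint (char_poly_monic _).
rewrite -eigenvalue_root_char; apply/eigenvalueP; exists (\row_i Y i).
  apply/rowP=> j; rewrite !mxE HA; apply: eq_bigr => i _.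
  by rewrite !mxE mulrzr.
apply/eqP => /rowP /(_ i0); rewrite !mxE => h; by rewrite h eqxx in nz.
Qed.
Lemma ev_sum (b : algC) (p : {poly int}) :
  (map_poly (fun n : int => n%:~R) p).[b] = \sum_(l < size p) (p`_l)%:~R * b ^+ l.
Proof.
rewrite horner_coef size_map_inj_poly //; last exact: intr_inj.
by apply: eq_bigr => l _; rewrite coef_map.
Qed.

Lemma Aint_bipoly (al : algC) (p q : {poly int}) z : al != 0 ->
  z = (map_poly (fun n : int => n%:~R) p).[al] ->
  z = (map_poly (fun n : int => n%:~R) q).[al^-1] -> z \in Aint.
Proof.
move=> nz0 zp zq.
set J := size p; set K := size q; pose n := (J + K).+1.
pose c := al^-1.
have ac : forall l, al ^+ l * c ^+ l = 1.
  by move=> l; rewrite -exprMn /c mulfV // expr1n.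
pose Yn (i : nat) := al ^+ i * c ^+ K.
pose S (y : algC) := exists a : 'I_n -> int, y = \sum_(i < n) Yn i *~ a i.
have S0 : S 0 by exists (fun _ => 0); rewrite big1 // => i _; rewrite mulr0z.
have SD : forall y1 y2, S y1 -> S y2 -> S (y1 + y2).
  move=> y1 y2 [a1 ->] [a2 ->]; exists (fun i => a1 i + a2 i).
  by rewrite -big_split; apply: eq_bigr => i _; rewrite mulrzDr.
have SZ : forall y (k : int), S y -> S (y *~ k).
  move=> y k [a1 ->]; exists (fun i => a1 i * k).
  by rewrite mulrz_suml; apply: eq_bigr => i _; rewrite mulrzA.
have SY : forall i, (i < n)%N -> S (Yn i).
  move=> i lt; exists (fun j => (j == Ordinal lt)%:R).
  rewrite (bigD1 (Ordinal lt)) //= eqxx mulr1z big1 ?addr0 // => j /negPf ->.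
  by rewrite mulr0z.
have Ssum : forall (m : nat) (F : 'I_m -> algC), (forall l, S (F l)) -> S (\sum_l F l).
  move=> m F hF; elim/big_rec: _ => // l y _ Hy; exact: SD.
have nzY : Yn 0%N != 0 by rewrite /Yn expr0 mul1r expf_neq0 // invr_eq0.
apply: (@Aint_module n (fun i => Yn i) z ord0 nzY) => j.
suff : S (z * Yn j) by [].
have [jK | Kj] := ltnP j K.
  rewrite {1}zp ev_sum mulr_suml; apply: Ssum => l.
  have -> : (p`_l)%:~R * al ^+ l * Yn j = Yn (j + l)%N * (p`_l)%:~R.
    by rewrite /Yn exprD; ring.
  rewrite mulrzr; apply: SZ; apply: SY; rewrite /n; have := ltn_ord l.
  move=> lJ; rewrite ltnS addnC; apply: leq_add; exact: ltnW.
rewrite {1}zq ev_sum mulr_suml; apply: Ssum => l.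
have lj : (l <= j)%N by apply: leq_trans Kj; apply: ltnW.
have -> : (q`_l)%:~R * c ^+ l * Yn j = Yn (j - l)%N * (q`_l)%:~R.
  rewrite /Yn -{1}(subnK lj) exprD.
  have := ac l; move: (al ^+ l) (c ^+ l) (al ^+ (j - l)) (c ^+ K) ((q`_l)%:~R : algC) => u v w t r huv.
  rewrite -[RHS]mulr1 -huv; have H : forall u v w t r : algC, r * v * (w * u * t) = w * t * r * (u * v) by move=> *; ring.
  exact: H.
rewrite mulrzr; apply: SZ; apply: SY; exact: leq_ltn_trans (leq_subr _ _) (ltn_ord j).
Qed.
Lemma prim_poly_root (a : algC) : exists f : {poly int},
  zcontents f = 1 /\ (map_poly (fun n : int => n%:~R) f).[a] = 0.
Proof.
have [p [Dp monp] _] := minCpolyP a.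
have [q [c nzc Epq]] := rat_poly_scale p.
have nzq : q != 0.
  apply/eqP => q0; move: Epq; rewrite q0 rmorph0 scaler0 => p0.
  by move: (monic_neq0 monp); rewrite p0 eqxx.
have rq : (map_poly (fun n : int => n%:~R) q).[a] = 0.
  have := root_minCpoly a; rewrite Dp Epq /root map_polyZ hornerZ.
  rewrite -map_poly_comp mulf_eq0 => /orP [|/eqP h].
    by rewrite fmorph_eq0 invr_eq0 intr_eq0 (negPf nzc).
  rewrite -h; congr (_.[a]); apply: eq_map_poly => n /=; by rewrite rmorph_int.
exists (zprimitive q); split; first by rewrite zcontents_primitive nzq.
move: rq; rewrite {1}[q]zpolyEprim map_polyZ hornerZ => /eqP.
rewrite mulf_eq0 intr_eq0 zcontents_eq0 (negPf nzq) /= => /eqP //.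
Qed.

Lemma contents_in (Pi : algC -> Prop) (f : {poly int}) :
  Pi 0 -> (forall y z, Pi y -> Pi z -> Pi (y + z)) ->
  (forall (k : int) z, Pi z -> Pi (k%:~R * z)) ->
  (forall i, Pi (f`_i)%:~R) -> Pi (zcontents f)%:~R.
Proof.
move=> P0 PD PM Pc.
rewrite /zcontents rmorphM /=; apply: (PM).
have Pn : forall i, Pi (absz f`_i)%:R.
  move=> i; have := Pc i; case: (f`_i) => n //= Hn.
  have := PM (-1) _ Hn; congr Pi; rewrite NegzE mulN1r rmorphN opprK /=.
  by rewrite -pmulrn.
elim/big_rec: _ => [|i g _ Hg]; first by rewrite /=; exact: P0.
have [u [v Huv]] := Bezoutz (absz f`_i)%:Z (g%:Z).
rewrite (_ : Posz (gcdn _ g) = gcdz (absz f`_i) g) //.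
rewrite -Huv rmorphD !rmorphM /=; apply: (PD); apply: (PM); first exact: Pn.
exact: Hg.
Qed.

Notation ev b p := ((map_poly (fun n : int => n%:~R) p).[b]).

Lemma drop_succ (f : {poly int}) s :
  drop_poly s f = (f`_s)%:P + drop_poly s.+1 f * 'X.
Proof.
apply/polyP => i; rewrite coefD coefC coefMX !coef_drop_poly.
by case: i => [|i] //=; rewrite ?addr0 ?add0r // addnS addSn.
Qed.

Lemma key_prime (a : algC) (P : algC -> Prop) : a != 0 ->
  prime_ideal_OK a P -> (forall z, den_ideal a z -> P z) ->
  exists z, den_ideal a z /\ ~ P (a * z).
Proof.
move=> nza [PO [P0 [PD [PM [P1 [Pprime _]]]]]] Pden.
apply: NNPP => Hn.
have H : forall z, den_ideal a z -> P (a * z).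
  move=> z dz; apply: NNPP => hz; apply: Hn; by exists z.
have [f [cf rf]] := prim_poly_root a.
pose T s := ev a (drop_poly s f).
pose tk s := ev a (take_poly s f).
have Eid : forall s, tk s + T s * a ^+ s = 0.
  move=> s; rewrite -rf -[in RHS](poly_take_drop s f) rmorphD rmorphM /= map_polyXn.
  by rewrite hornerD hornerM hornerXn.
have Tsucc : forall s, T s = (f`_s)%:~R + T s.+1 * a.
  move=> s; rewrite /T {1}drop_succ rmorphD rmorphM /= map_polyC map_polyX.
  by rewrite hornerD hornerM hornerC hornerX.
have T0 : T 0%N = 0 by rewrite -(Eid 0%N) /tk take_poly0l rmorph0 horner0 add0r expr0 mulr1.
have TZc : forall s, Zadj a^-1 (T s).
  move=> s; have -> : T s = - (tk s * a^-1 ^+ s).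
    apply: (mulIf (expf_neq0 s nza)); rewrite mulNr -mulrA -exprMn mulVf // expr1n mulr1.
    by apply/eqP; rewrite -addr_eq0 addrC Eid.
  apply: Zadj_opp; rewrite /tk ev_sum mulr_suml; apply: Zadj_sum => l _.
  have ls : (l < s)%N by have := ltn_ord l; move/leq_trans; apply; apply: size_take_poly.
  have E : a ^+ l * a^-1 ^+ s = a^-1 ^+ (s - l).
    move: (nat_of_ord l) ls => l' ls'; move: (s - l')%N (subnK (ltnW ls')) => k <-.
    by rewrite exprD mulrC -mulrA -exprMn mulVf // expr1n mulr1.
  rewrite -mulrA E.
  apply: Zadj_mul; [exact: Zadj_int | exact: Zadj_exp].
have TOK : forall s, OK a (T s).
  move=> s; split; first by apply: Zadj_Qadj; exists (drop_poly s f).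
  have [q Hq] := TZc s.
  exact: (@Aint_bipoly a (drop_poly s f) q).
have Tden : forall s, den_ideal a (T s.+1).
  move=> s; split => //; have -> : a * T s.+1 = T s - (f`_s)%:~R by rewrite (Tsucc s); ring.
  apply: OK_add => //; apply: OK_opp; exact: OK_int.
have Pneg : forall y, P y -> P (- y).
  move=> y Py; rewrite -mulN1r; apply: PM => //; exact: (OK_int a (-1)).
have Pc : forall s, P (f`_s)%:~R.
  move=> s; have -> : (f`_s)%:~R = T s + - (a * T s.+1) by rewrite (Tsucc s); ring.
  apply: PD; last by apply: Pneg; apply: H.
  by case: s => [|s]; [rewrite T0 | apply: Pden].
apply: P1; have := @contents_in P f P0 PD; rewrite cf /=; apply => //.
by move=> k z Pz; apply: PM => //; exact: OK_int.
Qed.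

Lemma ideal_pow_mul (a : algC) (P : algC -> Prop) (u w : algC) N :
  P u -> OK a w -> ideal_pow a P N (u ^+ N * w).
Proof.
move=> Pu Ow; elim: N => [|N IH]; first by rewrite expr0 mul1r.
exists [:: (u, u ^+ N * w)]; split; first by move=> q; rewrite inE => /eqP -> /=.
by rewrite big_seq1 /= exprS mulrA.
Qed.

Lemma notP_exp (a : algC) (P : algC -> Prop) v k : prime_ideal_OK a P ->
  OK a v -> ~ P v -> ~ P (v ^+ k).
Proof.
move=> [PO [P0 [PD [PM [P1 [Pprime _]]]]]] Ov nPv.
elim: k => [|k IH]; first by rewrite expr0.
rewrite exprS => /Pprime [] //; exact: OK_exp.
Qed.

Lemma val_main (a : algC) (P : algC -> Prop) : a != 0 ->
  prime_ideal_OK a P -> (forall z, den_ideal a z -> P z) ->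
  forall (N k : nat) y, (N <= k)%N -> Zadj a^-1 y -> val_ge a P N (a^-1 ^+ k * y).
Proof.
move=> nza HP Pden N k y Nk [q ->].
have [z [[Oz Oaz] nP]] := @key_prime a P nza HP Pden.
have Pz : P z by apply: Pden.
have PO : forall t, P t -> OK a t by case: HP.
pose v := a * z; pose L := size q.
have vc : v * a^-1 = z by rewrite /v mulrC mulrA mulVf // mul1r.
exists (v ^+ (k + L)); split.
- by apply: OK_exp; rewrite /v.
- by apply: (@notP_exp a P v (k + L) HP); rewrite /v.
rewrite ev_sum mulr_sumr mulr_sumr.
have -> : \sum_(i < size q) v ^+ (k + L) * (a^-1 ^+ k * ((q`_i)%:~R * a^-1 ^+ i))
   = z ^+ N * \sum_(i < size q) (z ^+ (k - N) * ((q`_i)%:~R * z ^+ i * v ^+ (L - i))).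
  rewrite mulr_sumr; apply: eq_bigr => i _.
  have iL : (i <= L)%N by apply: ltnW.
  rewrite -vc; move: (q`_i)%:~R => r; clear vc; move: v (a^-1) => V C.
  rewrite (mulrA ((V * C) ^+ N)) -exprD (subnKC Nk) -{1}(subnK iL) !exprD !exprMn.
  move: (V ^+ k) (V ^+ i) (V ^+ (L - i)) (C ^+ k) (C ^+ i) => A B E F G.
  ring.
apply: ideal_pow_mul => //; apply: OK_sum => i _.
apply: OK_mul; first exact: OK_exp.
apply: OK_mul; last by apply: OK_exp; rewrite /v.
by apply: OK_mul; [exact: OK_int | exact: OK_exp].
Qed.

Lemma expanding_neq0 a : expanding a -> a != 0.
Proof.
move=> he; apply/eqP => a0; have := he 0; rewrite a0 normr0 ltr10.
by move=> h; apply/negP: (h (root_minCpoly 0)).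
Qed.

Lemma step1 (a : algC) (D : algC -> Prop) (m : int) :
  a != 0 -> standard_digits a D ->
  (exists D' : algC -> Prop, (forall d, D' d -> D d) /\
     complete_residue_system (powZinv a m) (powZinv a (m - 1)) D') ->
  forall x, Lambda a m x -> exists d, D d /\ Lambda a m (a * x + d).
Proof.
move=> nza [DZ _] [D' [D'D [_ Dres]]] x [Zx [y [Zy Ey]]].
have Pm : powZinv a m (- (a * x)).
  exists (- y); split; first exact: Zadj_opp.
  rewrite Ey mulrA -{1}(expr1z a) -expfzDr // addrC subrK; ring.
have [d [[D'd [y' [Zy' Ey']]] _]] := Dres _ Pm.
exists d; split; first exact: D'D.
split; first by apply: Zadj_add; [apply: Zadj_mul => //; apply: Zadj_gen | apply/DZ/D'D].
exists (- y'); split; first exact: Zadj_opp.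
by rewrite mulrN -Ey'; ring.
Qed.

Lemma pow_shift (a : algC) (M : int) n : a != 0 -> (`|M| <= n)%N ->
  exists k, (n - `|M| <= k)%N /\ a^-1 ^+ n * a ^ M = a^-1 ^+ k.
Proof.
move=> nza; case: M => j /= jn.
- exists (n - j)%N; split => //.
  rewrite -{1}(subnK jn) exprD -mulrA -exprMn mulVf // expr1n mulr1 //.
- exists (n + j.+1)%N; split; first by apply: leq_trans (leq_subr _ _) (leq_addr _ _).
  have E : a ^ Negz j = a^-1 ^+ j.+1 by rewrite exprVn; reflexivity.
  by rewrite E exprD.
Qed.

Lemma step2 (a : algC) (D : algC -> Prop) (m : int) : a != 0 ->
  (forall x, Lambda a m x -> exists d, D d /\ Lambda a m (a * x + d)) ->
  forall x, Lambda a m x -> G_nonempty a D x.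
Proof.
move=> nza H x Lx.
have g_ex : forall y, exists d, Lambda a m y -> D d /\ Lambda a m (a * y + d).
  move=> y; case: (classic (Lambda a m y)) => [Ly | nL].
    by have [d hd] := H y Ly; exists d.
  by exists 0.
pose g y := proj1_sig (constructive_indefinite_description _ (g_ex y)).
have gP : forall y, Lambda a m y -> D (g y) /\ Lambda a m (a * y + g y).
  by move=> y; rewrite /g; case: constructive_indefinite_description.
pose X n := iter n (fun y => a * y + g y) x.
have LX : forall n, Lambda a m (X n).
  by elim => [|n IH] //=; apply: (gP _ IH).2.
exists (fun k => g (X k.-1)); split.
  by move=> k; apply: (gP _ (LX _)).1.
move=> P HP Pden N.
have Esum : forall n, x + \sum_(1 <= k < n.+1) g (X k.-1) * a ^- k = a^-1 ^+ n * X n.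
  elim => [|n IH]; first by rewrite big_geq // addr0 expr0 mul1r.
  rewrite big_nat_recr //= addrA IH /= -/(X n) !exprVn exprS.
  have nzA : a ^+ n != 0 by rewrite expf_neq0.
  move: (a ^+ n) nzA (X n) (g (X n)) => A nzA Y G.
  by field; rewrite nzA nza.
exists (N + `|m - 1|)%N => n Nn.
rewrite Esum; have [_ [y [Zy ->]]] := LX n.
have [k [kn Ek]] := @pow_shift a (m - 1) n nza (leq_trans (leq_addl _ _) Nn).
rewrite mulrA Ek; apply: (@val_main a P nza HP Pden N k y _ Zy).
apply: leq_trans kn; rewrite leq_subRL.
  by rewrite addnC.
exact: leq_trans (leq_addl _ _) Nn.
Qed.

Theorem lemma6p10 (a : algC) (D : algC -> Prop) (m : int) :
  expanding a ->
  standard_digits a D ->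
  (forall d, D d -> powZinv a m d) ->
  (exists D' : algC -> Prop, (forall d, D' d -> D d) /\
     complete_residue_system (powZinv a m) (powZinv a (m - 1)) D') ->
  forall x, Lambda a m x ->
    (exists d, D d /\ Lambda a m (a * x + d)) /\ G_nonempty a D x.
Proof.
move=> he hs _ hD' x Lx.
have nza := @expanding_neq0 a he.
have S1 := @step1 a D m nza hs hD'.
split; first exact: S1.
exact: (@step2 a D m nza S1 x Lx).
Qed.
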